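(* Let $\mathfrak X$ be a separable Banach space and let $(\Omega,\mathcal F,\mu)$ be a measure space with $\mu$ a positive finite measure. Let $X:\Omega\to\mathcal K(\mathfrak X)$ be an integrably bounded random closed set, and let $a\in\mathfrak X$. Then \[ \int_\Omega X\,d\mu=\{a\} \] holds if and only if there exists $x\in L^1[\Omega;\mathfrak X]$ such that $X(\omega)=\{x(\omega)\}$ for $\mu$-a.e. $\omega$ and $\int_\Omega x\,d\mu=a$.
   Context: $\mathcal K(\mathfrak X)$ denotes the nonempty closed subsets of $\mathfrak X$. A random closed set $X$ is an (Effros-)measurable map $\Omega\to\mathcal K(\mathfrak X)$. It is integrably bounded, written $X\in L^1[\Omega;\mathcal K(\mathfrak X)]$, if $\omega\mapsto\sup\{\|y\|:y\in X(\omega)\}$ is $\mu$-integrable. $S_X$ denotes the set of integrable selections of $X$, i.e. those $x\in L^1[\Omega;\mathfrak X]$ with $x(\omega)\in X(\omega)$ for $\mu$-a.e. $\omega$. The Aumann integral is $\int_\Omega X\,d\mu=\{\int_\Omega x\,d\mu : x\in S_X\}$, where the integrals are Bochner integrals. *)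

(* Defs.v *)
From HB Require Import structures.
From mathcomp Require Import all_boot all_order all_algebra.
From mathcomp Require Import all_classical all_reals all_analysis.
Set Implicit Arguments. Unset Strict Implicit. Unset Printing Implicit Defensive.
Import Order.TTheory GRing.Theory Num.Theory.
Import numFieldNormedType.Exports.
Local Open Scope classical_set_scope.
Local Open Scope ring_scope.

Section Defs.
Context {R : realType} {d : measure_display} {T : measurableType d}.
Context {V : completeNormedModType R}.

Definition separable_space : Prop :=
  exists D : set V, countable D /\ dense D.

(** mu-simple functions, given by a finite representation
    [:: (v_1, A_1); ...; (v_k, A_k)] with A_i measurable of finite measure:
    the function  w |-> \sum_i 1_{A_i}(w) v_i. *)
Definition simple_rep (mu : {measure set T -> \bar R}) (l : seq (V * set T)) :=
  forall p, p \in l -> measurable p.2 /\ (mu p.2 < +oo)%E.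

Definition simple_fun (l : seq (V * set T)) : T -> V :=
  fun w => \sum_(p <- l) ((\1_(p.2) w : R) *: p.1).

Definition simple_int (mu : {measure set T -> \bar R}) (l : seq (V * set T)) : V :=
  \sum_(p <- l) (fine (mu p.2) *: p.1).

Definition strongly_measurable (mu : {measure set T -> \bar R}) (f : T -> V) :=
  exists s : nat -> seq (V * set T), (forall n, simple_rep mu (s n)) /\
    {ae mu, forall w, (fun n => simple_fun (s n) w) @ \oo --> f w}.

Definition bochner (mu : {measure set T -> \bar R}) (f : T -> V) (a : V) :=
  strongly_measurable mu f /\
  exists s : nat -> seq (V * set T), (forall n, simple_rep mu (s n)) /\
    (fun n => (\int[mu]_(w in setT) (`|f w - simple_fun (s n) w|)%:E)%E)
      @ \oo --> 0%E /\
    (fun n => simple_int mu (s n)) @ \oo --> a.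

Definition L1 (mu : {measure set T -> \bar R}) (f : T -> V) :=
  exists a, bochner mu f a.

Definition random_closed_set (X : T -> set V) :=
  (forall w, X w !=set0 /\ closed (X w)) /\
  (forall U : set V, open U -> measurable [set w | X w `&` U !=set0]).

Definition integrably_bounded (mu : {measure set T -> \bar R}) (X : T -> set V) :=
  mu.-integrable setT
    (fun w => ereal_sup [set (`|y|)%:E | y in X w]).

Definition selections (mu : {measure set T -> \bar R}) (X : T -> set V) :=
  [set x : T -> V | L1 mu x /\ {ae mu, forall w, X w (x w)}].

Definition aumann (mu : {measure set T -> \bar R}) (X : T -> set V) : set V :=
  [set a | exists2 x, selections mu X x & bochner mu x a].

End Defs.

(* Main.v *)
Require Import Defs.
From HB Require Import structures.
From mathcomp Require Import all_boot all_order all_algebra.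
From mathcomp Require Import all_classical all_reals all_analysis.
From mathcomp Require Import measurable_realfun.
From mathcomp Require Import lra.
Set Implicit Arguments. Unset Strict Implicit. Unset Printing Implicit Defensive.
Import Order.TTheory GRing.Theory Num.Theory.
Import numFieldNormedType.Exports.
Local Open Scope classical_set_scope.
Local Open Scope ring_scope.


Section P1.
Context {R : realType} {V : completeNormedModType R} {d : measure_display} {T : measurableType d}.
Variable mu : {finite_measure set T -> \bar R}.
Local Notation sf := (@simple_fun R d T V).
Local Notation si := (@simple_int R d T V mu).

Definition srep (l : seq (V * set T)) := forall p, p \in l -> measurable p.2.

Lemma srep_rep l : srep l -> simple_rep mu l.
Proof.
move=> h p /h mp; split => //.
by rewrite ltey_eq fin_num_measure.
Qed.

Lemma sf_cons p l w : sf (p :: l) w = (\1_(p.2) w : R) *: p.1 + sf l w.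
Proof. by rewrite /simple_fun big_cons. Qed.
Lemma sf_nil w : sf [::] w = 0.
Proof. by rewrite /simple_fun big_nil. Qed.
Lemma sf_cat l1 l2 w : sf (l1 ++ l2) w = sf l1 w + sf l2 w.
Proof. by rewrite /simple_fun big_cat. Qed.

Definition negl (l : seq (V * set T)) := [seq (- p.1, p.2) | p <- l].
Definition restr (A : set T) (l : seq (V * set T)) := [seq (p.1, p.2 `&` A) | p <- l].

Lemma sf_neg l w : sf (negl l) w = - sf l w.
Proof. by rewrite /simple_fun big_map -sumrN; apply: eq_bigr => p _; rewrite scalerN. Qed.
Lemma sf_restr A l w : sf (restr A l) w = (\1_A w : R) *: sf l w.
Proof.
rewrite /simple_fun big_map scaler_sumr; apply: eq_bigr => p _ /=.
by rewrite indicI scalerA mulrC.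
Qed.
Lemma si_cat l1 l2 : si (l1 ++ l2) = si l1 + si l2.
Proof. by rewrite /simple_int big_cat. Qed.
Lemma si_neg l : si (negl l) = - si l.
Proof. by rewrite /simple_int big_map -sumrN; apply: eq_bigr => p _; rewrite scalerN. Qed.

Lemma srep_cat l1 l2 : srep l1 -> srep l2 -> srep (l1 ++ l2).
Proof. by move=> h1 h2 p; rewrite mem_cat => /orP[/h1|/h2]. Qed.
Lemma srep_neg l : srep l -> srep (negl l).
Proof. by move=> h p /mapP[q /h mq ->]. Qed.
Lemma srep_restr A l : measurable A -> srep l -> srep (restr A l).
Proof. by move=> mA h p /mapP[q /h mq ->]; exact: measurableI. Qed.

Lemma sf_meas l : srep l -> forall P : set V, measurable [set w | P (sf l w)].
Proof.
elim: l => [|p l IH] hl P.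
  have [h|h] := pselect (P 0).
    rewrite (_ : [set w | P (sf [::] w)] = setT) //.
    by rewrite predeqE => w /=; rewrite sf_nil; split.
  rewrite (_ : [set w | P (sf [::] w)] = set0) //.
  by rewrite predeqE => w /=; rewrite sf_nil; split.
have mp : measurable p.2 by apply: hl; rewrite mem_head.
have hl' : srep l by move=> q ql; apply: hl; rewrite in_cons ql orbT.
rewrite (_ : [set w | _] = (p.2 `&` [set w | P (p.1 + sf l w)]) `|`
   (~` p.2 `&` [set w | P (sf l w)])).
  apply: measurableU; apply: measurableI => //.
  - exact: (IH hl' (fun v => P (p.1 + v))).
  - exact: measurableC.
  - exact: (IH hl' P).
apply/seteqP; split => w /=; rewrite sf_cons indicE.
  case: (boolP (w \in p.2)) => h; rewrite ?scale1r ?scale0r ?add0r => Pw.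
    by left; split => //; exact: set_mem.
  by right; split => // /mem_set; rewrite (negbTE h).
by case=> -[h Pw]; rewrite ?(mem_set h) ?scale1r // memNset // scale0r add0r.
Qed.

End P1.


Section P2.
Context {R : realType} {V : completeNormedModType R} {d : measure_display} {T : measurableType d}.
Variable mu : {finite_measure set T -> \bar R}.
Local Notation sf := (@simple_fun R d T V).
Local Notation si := (@simple_int R d T V mu).

Definition SM (f : T -> V) := exists s : nat -> seq (V * set T),
  (forall n, srep (s n)) /\ forall w, (fun n => sf (s n) w) @ \oo --> f w.

Lemma sf_mfun l (g : V -> R) : srep l -> measurable_fun setT (fun w => g (sf l w)).
Proof. by move=> hl _ Y mY; rewrite setTI; exact: (sf_meas hl (fun v => Y (g v))). Qed.

Lemma SM_sf l : srep l -> SM (sf l).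
Proof. by move=> hl; exists (fun=> l); split => // w; exact: cvg_cst. Qed.

Lemma SM_cst v : SM (fun=> v).
Proof.
exists (fun=> [:: (v, setT)]); split.
  by move=> n p; rewrite inE => /eqP -> /=.
move=> w; apply: cvg_near_cst; apply: nearW => n.
by rewrite sf_cons sf_nil addr0 indicE mem_set // scale1r.
Qed.

Lemma SM_add f g : SM f -> SM g -> SM (fun w => f w + g w).
Proof.
move=> [s [hs cs]] [t [ht ct]]; exists (fun n => s n ++ t n); split.
  by move=> n; exact: srep_cat.
move=> w; under eq_fun do rewrite sf_cat; exact: cvgD.
Qed.

Lemma SM_neg f : SM f -> SM (fun w => - f w).
Proof.
move=> [s [hs cs]]; exists (fun n => negl (s n)); split.
  by move=> n; exact: srep_neg.
move=> w; under eq_fun do rewrite sf_neg; exact: cvgN.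
Qed.

Lemma SM_indic A f : measurable A -> SM f -> SM (fun w => (\1_A w : R) *: f w).
Proof.
move=> mA [s [hs cs]]; exists (fun n => restr A (s n)); split.
  by move=> n; exact: srep_restr.
move=> w; under eq_fun do rewrite sf_restr; exact: cvgZl_tmp.
Qed.

Lemma SM_norm f : SM f -> measurable_fun setT (fun w => `|f w|).
Proof.
move=> [s [hs cs]].
apply: (@measurable_fun_cvg _ _ _ _ (fun n w => `|sf (s n) w|)).
  by move=> n; exact: sf_mfun.
by move=> w _; exact: cvg_norm.
Qed.

Lemma SM_dist f g : SM f -> SM g -> measurable_fun setT (fun w => `|f w - g w|).
Proof. by move=> hf hg; apply: SM_norm; apply: SM_add => //; exact: SM_neg. Qed.

Lemma SM_normE f : SM f -> measurable_fun setT (fun w => (`|f w|)%:E).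
Proof. by move=> hf; apply/measurable_EFinP; exact: SM_norm. Qed.

Lemma SM_distE f g : SM f -> SM g -> measurable_fun setT (fun w => (`|f w - g w|)%:E).
Proof. by move=> hf hg; apply/measurable_EFinP; exact: SM_dist. Qed.

End P2.


Section P3.
Context {R : realType} {d : measure_display} {T : measurableType d}.
Variable mu : {finite_measure set T -> \bar R}.
Local Open Scope ereal_scope.

Lemma le_int_any (f g : T -> \bar R) : (forall w, 0 <= f w) -> (forall w, f w <= g w) ->
  \int[mu]_w f w <= \int[mu]_w g w.
Proof.
move=> f0 fg; have g0 w : 0 <= g w by exact: le_trans (f0 w) (fg w).
rewrite (ge0_integralTE mu f0) (ge0_integralTE mu g0) /=.
apply: ereal_sup_le => _ [h hf <-]; exists h => //= w; exact: le_trans (hf w) (fg w).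
Qed.

Lemma int_ae_any (f h : T -> \bar R) : (forall w, 0 <= f w) -> (forall w, 0 <= h w) ->
  measurable_fun setT h -> {ae mu, forall w, f w = h w} ->
  \int[mu]_w f w = \int[mu]_w h w.
Proof.
move=> f0 h0 mh [N [mN N0 sub]].
have nN w : ~ N w -> f w = h w.
  by move=> Nw; apply: contrapT => fh; apply: Nw; apply: sub.
pose h1 := h \_ (~` N).
pose h2 := fun w => h w + ((cst +oo) \_ N) w.
have mh1 : measurable_fun setT h1.
  apply/(measurable_restrictT _ (measurableC mN)).1.
  exact: (measurable_funS measurableT).
have mh2 : measurable_fun setT h2.
  apply: emeasurable_funD => //.
  by apply/(measurable_restrictT _ mN).1; exact: measurable_cst.
have ae1 : ae_eq mu setT h h1.
  exists N; split => // w /= hw; apply: contrapT => Nw; apply: hw => _.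
  by rewrite /h1 patchE mem_set.
have ae2 : ae_eq mu setT h h2.
  exists N; split => // w /= hw; apply: contrapT => Nw; apply: hw => _.
  by rewrite /h2 patchE memNset // adde0.
apply/eqP; rewrite eq_le; apply/andP; split.
  rewrite [X in _ <= X](ae_eq_integral h2) //.
  apply: le_int_any => // w; rewrite /h2 patchE; case: ifPn => [/set_mem Nw|/negP Nw].
    by rewrite addey ?leey // gt_eqF // (lt_le_trans _ (h0 w)) // ltNy0.
  by rewrite adde0 nN //; apply: contra_not Nw => /mem_set.
rewrite [X in X <= _](ae_eq_integral h1) //.
apply: le_int_any => // w; first by rewrite /h1 patchE; case: ifPn.
rewrite /h1 patchE; case: ifPn => [/set_mem Nw|_]; last exact: f0.
by rewrite nN.
Qed.

End P3.


Section P4.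
Context {R : realType} {V : completeNormedModType R} {d : measure_display} {T : measurableType d}.
Variable mu : {finite_measure set T -> \bar R}.
Local Notation sf := (@simple_fun R d T V).
Local Notation si := (@simple_int R d T V mu).

Lemma mufin A : measurable A -> mu A \is a fin_num.
Proof. by move=> mA; exact: fin_num_measure. Qed.

Lemma mu_split X A : measurable X -> measurable A ->
  fine (mu X) = fine (mu (X `&` A)) + fine (mu (X `\` A)).
Proof.
move=> mX mA.
rewrite -fineD ?mufin //; [|exact: measurableI|exact: measurableD].
rewrite -measureU //; [|exact: measurableI|exact: measurableD|].
  by rewrite setUIDK.
by rewrite setDE setIACA setICr setI0.
Qed.

Lemma si_split l B A : srep l -> measurable B -> measurable A ->
  si (restr B l) = si (restr (B `&` A) l) + si (restr (B `\` A) l).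
Proof.
move=> hl mB mA; rewrite /simple_int !big_map -big_split /=.
rewrite big_seq [RHS]big_seq; apply: eq_bigr => q ql.
have mq := hl q ql.
rewrite -scalerDl (mu_split (measurableI _ _ mq mB) mA); congr (_ *: _).
by rewrite setIA !setDE setIA.
Qed.

Lemma restr_cons (B : set T) (p : V * set T) l : restr B (p :: l) = (p.1, p.2 `&` B) :: restr B l.
Proof. by []. Qed.
Lemma si_cons p l : si (p :: l) = fine (mu p.2) *: p.1 + si l.
Proof. by rewrite /simple_int big_cons. Qed.

Lemma norm_si_gen l : srep l -> forall B v, measurable B ->
  ((`| fine (mu B) *: v + si (restr B l)|)%:E <= \int[mu]_(w in B) (`|v + sf l w|)%:E)%E.
Proof.
elim: l => [|[u A] l IH] hl B v mB.
  rewrite /simple_int /restr /= big_nil addr0.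
  under eq_integral do rewrite sf_nil addr0.
  rewrite integral_cst // normrZ ger0_norm ?fine_ge0 ?measure_ge0 //.
  rewrite -[X in (_ <= _ * X)%E]fineK; last exact: mufin.
  by rewrite -EFinM mulrC.
have mA : measurable A := hl (u, A) (mem_head _ _).
have hl' : srep l by move=> q ql; apply: hl; rewrite in_cons ql orbT.
have mBA := measurableI _ _ mB mA.
have mBnA := measurableD mB mA.
have -> : fine (mu B) *: v + si (restr B ((u, A) :: l)) =
   (fine (mu (B `&` A)) *: (v + u) + si (restr (B `&` A) l)) +
   (fine (mu (B `\` A)) *: v + si (restr (B `\` A) l)).
  rewrite restr_cons si_cons /= (si_split hl' mB mA) (mu_split mB mA) (setIC A B).
  rewrite scalerDl scalerDr -!addrA; congr (_ + _).
  set c := fine (mu (B `\` A)) *: v.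
  by rewrite (addrCA c) (addrCA c).
apply: (le_trans (y := ((`|fine (mu (B `&` A)) *: (v + u) + si (restr (B `&` A) l)|)%:E +
   (`|fine (mu (B `\` A)) *: v + si (restr (B `\` A) l)|)%:E)%E)).
  by rewrite -EFinD lee_fin ler_normD.
have mfB : measurable_fun ((B `&` A) `|` (B `\` A)) (fun w => (`|v + sf ((u, A) :: l) w|)%:E).
  apply: (measurable_funS measurableT) => //.
  by apply/measurable_EFinP; exact: (sf_mfun (fun x => `|v + x|) hl).
rewrite [X in (_ <= integral _ X _)%E](_ : B = (B `&` A) `|` (B `\` A)); last by rewrite setUIDK.
rewrite ge0_integral_setU //; last first.
  by rewrite setDE /disj_set setIACA setICr setI0.
apply: leeD.
  apply: (le_trans (IH hl' _ _ mBA)); rewrite le_eqVlt; apply/orP; left; apply/eqP; apply: eq_integral => w.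
  rewrite inE => -[_ Aw]; rewrite sf_cons indicE (mem_set Aw) scale1r /=.
  by rewrite addrA.
apply: (le_trans (IH hl' _ _ mBnA)); rewrite le_eqVlt; apply/orP; left; apply/eqP; apply: eq_integral => w.
by rewrite inE => -[_ Aw]; rewrite sf_cons indicE memNset // scale0r add0r.
Qed.

Lemma norm_si l : srep l -> ((`|si l|)%:E <= \int[mu]_w (`|sf l w|)%:E)%E.
Proof.
move=> hl; have := norm_si_gen hl 0 measurableT.
rewrite scaler0 add0r.
have -> : restr setT l = l.
  by rewrite /restr; under eq_map do rewrite setIT; rewrite map_id_in // => -[].
by under eq_integral do rewrite add0r.
Qed.

End P4.


Section P5.
Context {R : realType} {V : completeNormedModType R} {d : measure_display} {T : measurableType d}.
Variable mu : {finite_measure set T -> \bar R}.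
Local Notation sf := (@simple_fun R d T V).
Local Notation si := (@simple_int R d T V mu).
Local Notation SM := (@SM R V d T).

Definition Ie (f : T -> V) l := (\int[mu]_w (`|f w - sf l w|)%:E)%E.

Definition B (f : T -> V) (a : V) := SM f /\ exists s : nat -> seq (V * set T),
  (forall n, srep (s n)) /\ (fun n => Ie f (s n)) @ \oo --> 0%E /\
  (fun n => si (s n)) @ \oo --> a.

Lemma Ie_ge0 f l : (0 <= Ie f l)%E.
Proof. by apply: integral_ge0 => w _; rewrite lee_fin. Qed.

Lemma ecvg0_lt (x : nat -> \bar R) : x @ \oo --> 0%E ->
  forall e : R, 0 < e -> \forall n \near \oo, (x n < e%:E)%E.
Proof.
move=> /fine_cvgP [fx cx] e e0.
have h := cvgr0_norm_lt _ cx _ e0.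
near=> n.
have fn : x n \is a fin_num by near: n; exact: fx.
have : `|(fine \o x) n| < e by near: n; exact: h.
rewrite -(fineK fn) lte_fin /=; exact: le_lt_trans (ler_norm _).
Unshelve. all: by end_near. Qed.

Lemma ecvg0_le (x y : nat -> \bar R) : (forall n, 0 <= x n)%E -> (forall n, x n <= y n)%E ->
  y @ \oo --> 0%E -> x @ \oo --> 0%E.
Proof.
move=> x0 xy cy; apply: (@squeeze_cvge _ _ _ _ (cst 0%E) _ y) => //.
  by apply: nearW => n; rewrite x0 xy.
exact: cvg_cst.
Qed.

Lemma ecvg0_add (x y : nat -> \bar R) : x @ \oo --> 0%E -> y @ \oo --> 0%E ->
  (fun n => x n + y n)%E @ \oo --> 0%E.
Proof. by move=> cx cy; rewrite -(adde0 0%E); apply: cvgeD. Qed.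

Lemma si_dist l l' : srep l -> srep l' ->
  ((`|si l - si l'|)%:E <= \int[mu]_w (`|sf l w - sf l' w|)%:E)%E.
Proof.
move=> hl hl'; have := norm_si mu (srep_cat hl (srep_neg hl')).
rewrite si_cat si_neg.
by under eq_integral do rewrite sf_cat sf_neg.
Qed.

Lemma int_addle (f g h : T -> R) : measurable_fun setT f -> measurable_fun setT g ->
  measurable_fun setT h -> (forall w, 0 <= f w) -> (forall w, 0 <= g w) -> (forall w, 0 <= h w) ->
  (forall w, f w <= g w + h w) ->
  (\int[mu]_w (f w)%:E <= \int[mu]_w (g w)%:E + \int[mu]_w (h w)%:E)%E.
Proof.
move=> mf mg mh f0 g0 h0 fgh.
have mg' : measurable_fun setT (fun w => (g w)%:E) by exact/measurable_EFinP.
have mh' : measurable_fun setT (fun w => (h w)%:E) by exact/measurable_EFinP.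
rewrite -ge0_integralD //; [|by move=> w _; rewrite lee_fin|by move=> w _; rewrite lee_fin].
apply: ge0_le_integral => //.
- by move=> w _; rewrite lee_fin.
- exact/measurable_EFinP.
- exact: emeasurable_funD.
- by move=> w _; rewrite -EFinD lee_fin.
Qed.

Lemma int_tri f g h : SM f -> SM g -> SM h ->
  (\int[mu]_w (`|g w - h w|)%:E <=
   \int[mu]_w (`|f w - g w|)%:E + \int[mu]_w (`|f w - h w|)%:E)%E.
Proof.
move=> hf hg hh; apply: int_addle => //; try exact: SM_dist.
move=> w; rewrite (le_trans (ler_distD (f w) _ _)) //.
by rewrite distrC.
Qed.

Lemma dist_lt f l l' (e1 e2 : R) : SM f -> srep l -> srep l' ->
  (Ie f l < e1%:E)%E -> (Ie f l' < e2%:E)%E -> `|si l - si l'| < e1 + e2.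
Proof.
move=> hf hl hl' h1 h2; rewrite -lte_fin.
apply: (le_lt_trans (si_dist hl hl')).
apply: (le_lt_trans (int_tri hf (SM_sf hl) (SM_sf hl'))).
by rewrite EFinD; apply: lteD.
Qed.

Lemma B_uniq f a b : B f a -> B f b -> a = b.
Proof.
move=> [hf [s [hs [Is cs]]]] [_ [t [ht [It ct]]]].
apply/eqP; rewrite -subr_eq0 -normr_eq0; apply/eqP.
apply: contrapT => /eqP ne.
have e0 : 0 < `|a - b| / 4 by rewrite divr_gt0 // lt_def ne normr_ge0.
have h1 := ecvg0_lt Is e0; have h2 := ecvg0_lt It e0.
have h3 := (iffLR (cvgrPdist_lt _ _) cs) _ e0.
have h4 := (iffLR (cvgrPdist_lt _ _) ct) _ e0.
near \oo => n.
have k1 : (Ie f (s n) < (`|a - b| / 4)%:E)%E by near: n; exact: h1.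
have k2 : (Ie f (t n) < (`|a - b| / 4)%:E)%E by near: n; exact: h2.
have hn := dist_lt hf (hs n) (ht n) k1 k2.
have k3 : `|a - si (s n)| < `|a - b| / 4 by near: n; exact: h3.
have k4 : `|b - si (t n)| < `|a - b| / 4 by near: n; exact: h4.
have : `|a - b| <= `|a - si (s n)| + `|si (s n) - si (t n)| + `|b - si (t n)|.
  rewrite (le_trans (ler_distD (si (s n)) _ _)) // -addrA lerD2l.
  by rewrite (le_trans (ler_distD (si (t n)) _ _)) // [`|si (t n) - b|]distrC.
move: hn k3 k4; set x := `|a - b|; lra.
Unshelve. all: by end_near. Qed.

Lemma B_exists f (s : nat -> seq (V * set T)) : SM f -> (forall n, srep (s n)) ->
  (fun n => Ie f (s n)) @ \oo --> 0%E -> exists a, B f a.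
Proof.
move=> hf hs Is.
have cc : cvg ((fun n => si (s n)) @ \oo).
  apply: cauchy_cvg; apply: cauchy_exP => e e0.
  have e2 : 0 < e / 2 by rewrite divr_gt0.
  have [N _ HN] := ecvg0_lt Is e2.
  exists (si (s N)); exists N => // n /= Nn.
  rewrite -ball_normE /ball /=.
  by rewrite (splitr e); apply: (dist_lt hf (hs N) (hs n)); apply: HN => /=.
by exists (lim ((fun n => si (s n)) @ \oo)); split => //; exists s.
Qed.

Lemma B_add f g a b : B f a -> B g b -> B (fun w => f w + g w) (a + b).
Proof.
move=> [hf [s [hs [Is cs]]]] [hg [t [ht [It ct]]]].
split; first exact: SM_add.
exists (fun n => s n ++ t n); split; first by move=> n; exact: srep_cat.
split; last by under eq_fun do rewrite si_cat; exact: cvgD.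
apply: (ecvg0_le _ _ (ecvg0_add Is It)); first by move=> n; exact: Ie_ge0.
move=> n; apply: int_addle => //.
- apply: SM_dist (SM_sf (srep_cat (hs n) (ht n))); exact: SM_add.
- exact: (SM_dist hf (SM_sf (hs n))).
- exact: (SM_dist hg (SM_sf (ht n))).
move=> w; rewrite sf_cat.
by rewrite opprD addrACA ler_normD.
Qed.

Lemma B_neg f a : B f a -> B (fun w => - f w) (- a).
Proof.
move=> [hf [s [hs [Is cs]]]]; split; first exact: SM_neg.
exists (fun n => negl (s n)); split; first by move=> n; exact: srep_neg.
split; last by under eq_fun do rewrite si_neg; exact: cvgN.
suff -> : (fun n => Ie (fun w => - f w) (negl (s n))) = (fun n => Ie f (s n)) by [].
apply: funext => n; rewrite /Ie; apply: eq_integral => w _.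
by rewrite sf_neg -opprD normrN.
Qed.

Lemma B_indic A f a : measurable A -> B f a -> exists c, B (fun w => (\1_A w : R) *: f w) c.
Proof.
move=> mA [hf [s [hs [Is cs]]]].
apply: (@B_exists _ (fun n => restr A (s n))); first exact: SM_indic.
  by move=> n; exact: srep_restr.
apply: (ecvg0_le _ _ Is); first by move=> n; exact: Ie_ge0.
move=> n; apply: ge0_le_integral => //.
- by apply: SM_distE; [exact: SM_indic|apply: SM_sf; exact: srep_restr].
- exact: (SM_distE hf (SM_sf (hs n))).
move=> w _; rewrite lee_fin sf_restr -scalerBr normrZ indicE.
by case: (_ \in _); rewrite ?normr1 ?normr0 ?mul1r ?mul0r.
Qed.

Lemma B_cst A v : measurable A -> B (fun w => (\1_A w : R) *: v) (fine (mu A) *: v).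
Proof.
move=> mA; split.
  have -> : (fun w => (\1_A w : R) *: v) = sf [:: (v, A)].
    by apply: funext => w; rewrite sf_cons sf_nil addr0.
  by apply: SM_sf => p; rewrite inE => /eqP ->.
exists (fun=> [:: (v, A)]); split; first by move=> n p; rewrite inE => /eqP ->.
split.
  suff -> : (fun n : nat => Ie (fun w => (\1_A w : R) *: v) [:: (v, A)]) = cst 0%E.
    exact: cvg_cst.
  apply: funext => n; rewrite /Ie; apply: integral0_eq => w _.
  by rewrite sf_cons sf_nil addr0 subrr normr0.
by rewrite /simple_int big_cons big_nil addr0; exact: cvg_cst.
Qed.

Lemma B_norm f a : B f a -> ((`|a|)%:E <= \int[mu]_w (`|f w|)%:E)%E.
Proof.
move=> [hf [s [hs [Is cs]]]].
apply/lee_addgt0Pr => e e0.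
have e2 : 0 < e / 2 by rewrite divr_gt0.
have h1 := ecvg0_lt Is e2; have h3 := (iffLR (cvgrPdist_lt _ _) cs) _ e2.
near \oo => n.
have k1 : (Ie f (s n) < (e / 2)%:E)%E by near: n; exact: h1.
have k3 : `|a - si (s n)| < e / 2 by near: n; exact: h3.
have k2 := norm_si mu (hs n).
have k4 : (\int[mu]_w (`|sf (s n) w|)%:E <= \int[mu]_w (`|f w|)%:E + Ie f (s n))%E.
  apply: int_addle => //.
  - exact: (SM_norm (SM_sf (hs n))).
  - exact: SM_norm.
  - exact: (SM_dist hf (SM_sf (hs n))).
  move=> w.
  by rewrite -{1}(subKr (f w) (sf (s n) w)) ler_normB.
have ka : `|a| <= `|si (s n)| + e / 2.
  rewrite -(subrK (si (s n)) a) (le_trans (ler_normD _ _)) // addrC lerD2l.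
  by rewrite ltW.
apply: (le_trans (y := ((`|si (s n)|)%:E + (e / 2)%:E)%E)).
  by rewrite -EFinD lee_fin.
apply: (le_trans (y := (\int[mu]_w (`|f w|)%:E + Ie f (s n) + (e / 2)%:E)%E)).
  by rewrite leeD2r //; apply: le_trans k2 k4.
rewrite -addeA; apply: leeD => //; rewrite [X in (_ <= X%:E)%E](splitr e) EFinD; apply: leeD => //; exact: ltW k1.

Unshelve. all: by end_near. Qed.

End P5.


Section P6.
Context {R : realType} {V : completeNormedModType R} {d : measure_display} {T : measurableType d}.
Variable mu : {finite_measure set T -> \bar R}.
Local Notation sf := (@simple_fun R d T V).
Local Notation si := (@simple_int R d T V mu).
Local Notation SM := (@SM R V d T).
Local Notation B := (@B R V d T mu).
Local Notation Ie := (@Ie R V d T mu).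

Lemma rep_srep (l : seq (V * set T)) : simple_rep mu l -> srep l.
Proof. by move=> h p /h []. Qed.

Lemma sm_SM f : strongly_measurable mu f -> exists f', SM f' /\ {ae mu, forall w, f w = f' w}.
Proof.
move=> [s [hs [N [mN N0 sub]]]].
have cN w : ~ N w -> (fun n => sf (s n) w) @ \oo --> f w.
  by move=> Nw; apply: contrapT => h; apply: Nw; apply: sub.
exists (fun w => if w \in N then 0 else f w); split.
  exists (fun n => restr (~` N) (s n)); split.
    by move=> n; apply: srep_restr; [exact: measurableC|exact: rep_srep].
  move=> w; under eq_fun do rewrite sf_restr indicE.
  case: ifPn => [/set_mem Nw|/negP Nw].
    rewrite memNset; last by move=> /(_ Nw).
    under eq_fun do rewrite scale0r; exact: cvg_cst.
  rewrite mem_set; last by move=> /mem_set; exact: Nw.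
  under eq_fun do rewrite scale1r; apply: cN => /mem_set; exact: Nw.
exists N; split => // w /= h; apply: contrapT => Nw; apply: h.
by rewrite memNset.
Qed.

Lemma SM_sm f f' : SM f' -> {ae mu, forall w, f w = f' w} -> strongly_measurable mu f.
Proof.
move=> [s [hs cs]] [N [mN N0 sub]].
exists s; split; first by move=> n; exact: srep_rep.
exists N; split => // w /= h; apply: contrapT => Nw; apply: h.
have -> : f w = f' w by apply: contrapT => h; apply: Nw; apply: sub.
exact: cs.
Qed.

Lemma Ie_ae f f' l : SM f' -> srep l -> {ae mu, forall w, f w = f' w} ->
  (\int[mu]_w (`|f w - sf l w|)%:E = Ie f' l)%E.
Proof.
move=> hf hl [N [mN N0 sub]]; apply: int_ae_any => //.
  exact: (SM_distE hf (SM_sf hl)).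
exists N; split => // w /= h; apply: contrapT => Nw; apply: h.
have -> : f w = f' w by apply: contrapT => h; apply: Nw; apply: sub.
by [].
Qed.

Lemma bochner_B f a : bochner mu f a ->
  exists f', [/\ SM f', {ae mu, forall w, f w = f' w} & B f' a].
Proof.
move=> [hsm [s [hs [Is cs]]]].
have [f' [hf' ae]] := sm_SM hsm.
exists f'; split => //; split => //; exists s; split; first by move=> n; exact: rep_srep.
split => //.
suff <- : (fun n => (\int[mu]_w (`|f w - sf (s n) w|)%:E)%E) = (fun n => Ie f' (s n)) by [].
by apply: funext => n; apply: Ie_ae => //; exact: rep_srep.
Qed.

Lemma B_bochner f f' a : {ae mu, forall w, f w = f' w} -> B f' a -> bochner mu f a.
Proof.
move=> ae [hf' [s [hs [Is cs]]]]; split; first exact: (SM_sm hf').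
exists s; split; first by move=> n; exact: srep_rep.
split => //.
suff -> : (fun n => (\int[mu]_w (`|f w - sf (s n) w|)%:E)%E) = (fun n => Ie f' (s n)) by [].
by apply: funext => n; apply: Ie_ae.
Qed.

End P6.


Section P7.
Context {R : realType} {V : completeNormedModType R} {d : measure_display} {T : measurableType d}.
Variable mu : {finite_measure set T -> \bar R}.
Local Notation sf := (@simple_fun R d T V).
Local Notation si := (@simple_int R d T V mu).
Local Notation SM := (@SM R V d T).
Local Notation B := (@B R V d T mu).
Local Notation Ie := (@Ie R V d T mu).

Definition dseq (e : nat -> V) := forall z (eps : R), 0 < eps -> exists n, `|z - e n| < eps.

Lemma sep_dseq : separable_space (V := V) -> exists e, dseq e.
Proof.
move=> [D [cD dD]].
move/pfcard_geP: cD => [D0|[f]].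
  have := dD setT; rewrite D0 setI0 => /(_ _ openT) [].
    by exists 0.
  by [].
exists f => z eps eps0.
have [y [bzy Dy]] := dD (ball z eps) (ex_intro _ z (ballxx z eps0)) (ball_open z eps).
have [n _ fny] := @surj _ _ _ _ f _ Dy.
by exists n; rewrite fny; move: bzy; rewrite -ball_normE.
Qed.

Lemma small_inv (r : R) : 0 < r -> exists k : nat, (k.+1%:R)^-1 < r.
Proof.
move=> r0; exists (Num.Def.trunc r^-1).
have := truncnS_gt r^-1.
by rewrite invf_plt ?posrE ?ltr0n.
Qed.

Lemma meas_le (f : T -> R) (r : R) : measurable_fun setT f -> measurable [set w | f w <= r].
Proof.
move=> mf; have := mf measurableT `]-oo, r]%classic (measurable_itv _); rewrite setTI.
by rewrite (_ : f @^-1` _ = [set w | f w <= r]) //; apply/seteqP; split => w /=; rewrite in_itv.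
Qed.

Lemma mindicE (A : set T) : measurable A -> measurable_fun setT (fun w => (\1_A w : R)%:E).
Proof. by move=> mA; apply/measurable_EFinP; exact: measurable_indic. Qed.

Lemma B_zero e g : dseq e -> SM g ->
  (forall A, measurable A -> B (fun w => (\1_A w : R) *: g w) 0) ->
  {ae mu, forall w, g w = 0}.
Proof.
move=> de hg hB.
pose A j k := [set w | `|g w - e j| <= (k.+1%:R)^-1].
have mA j k : measurable (A j k) by apply: meas_le; apply: SM_dist => //; exact: SM_cst.
have A0 j k : 3 * (k.+1%:R)^-1 < `|e j| -> mu (A j k) = 0.
  move=> ejk; set r := (k.+1%:R)^-1 in ejk *.
  have r0 : 0 < r by rewrite invr_gt0 ltr0n.
  have hb := B_norm (B_add (hB _ (mA j k)) (B_neg (B_cst mu (e j) (mA j k)))).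
  have : ((`|fine (mu (A j k))| * `|e j|)%:E <= r%:E * mu (A j k))%E.
    move: hb; rewrite add0r normrN normrZ => /le_trans; apply.
    have -> : mu (A j k) = (\int[mu]_w (\1_(A j k) w)%:E)%E.
      by rewrite integral_indic // setIT.
    rewrite -ge0_integralZl //; [|exact: (mindicE (mA j k))|by rewrite lee_fin ltW].
    apply: ge0_le_integral => //.
    - apply/measurable_EFinP; apply: SM_norm; apply: SM_add.
        exact: SM_indic.
      by apply: SM_neg; apply: SM_indic => //; exact: SM_cst.
    - by apply: emeasurable_funM => //; exact: (mindicE (mA j k)).
    move=> w _; rewrite -EFinM lee_fin -scalerBr normrZ indicE.
    case: (boolP (w \in A j k)) => [/set_mem|_] /=; last by rewrite normr0 !mul0r mulr0.
    by rewrite normr1 !mul1r mulr1.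
  rewrite -(fineK (mufin mu (mA j k))) -EFinM lee_fin.
  have f0 : 0 <= fine (mu (A j k)) by rewrite fine_ge0.
  rewrite ger0_norm // => h.
  have : fine (mu (A j k)) = 0.
    apply/eqP; rewrite eq_le f0 andbT.
    have : fine (mu (A j k)) * (`|e j| - r) <= 0.
      by move: h => /=; rewrite mulrBr (mulrC _ r); lra.
    have er : 0 < `|e j| - r by lra.
    by rewrite pmulr_lle0.
  by move=> h0; rewrite -(fineK (mufin mu (mA j k))) h0.
pose C j k := if 3 * (k.+1%:R)^-1 < `|e j| then A j k else set0.
have nC : mu.-negligible (\bigcup_j \bigcup_k C j k).
  apply: negligible_bigcup => j; apply: negligible_bigcup => k.
  rewrite /C; case: ifPn => h; last exact: negligible_set0.
  by exists (A j k); split => //; exact: A0.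
apply: negligibleS nC => w /= gw.
have ng : 0 < `|g w| by rewrite normr_gt0; apply/eqP.
have [k hk] : exists k : nat, (k.+1%:R)^-1 < `|g w| / 4.
  by apply: small_inv; rewrite divr_gt0.
set r := (k.+1%:R)^-1 in hk.
have r0 : 0 < r by rewrite invr_gt0 ltr0n.
have [j hj] := de (g w) r r0.
exists j => //; exists k => //; rewrite /C ifT.
  by rewrite /A /= ltW.
have : `|g w| <= `|g w - e j| + `|e j|.
  by rewrite -{1}(subrK (e j) (g w)) ler_normD.
rewrite -/r; lra.
Qed.
End P7.


Section P8a.
Context {R : realType} {d : measure_display} {T : measurableType d}.

Definition mink (P : nat -> Prop) : nat :=
  match pselect (exists n, P n) with
  | left h => ex_minn (P := fun n => `[< P n >])
      (let: ex_intro n hn := h in ex_intro _ n (asboolT hn))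
  | right _ => 0%N
  end.

Lemma minkP (P : nat -> Prop) : (exists n, P n) ->
  P (mink P) /\ forall m, P m -> (mink P <= m)%N.
Proof.
move=> h; rewrite /mink; case: pselect => // h'.
case: ex_minnP => m /asboolP Pm hm; split => // k Pk; apply: hm.
exact/asboolP.
Qed.

Lemma mink_eq (P : nat -> Prop) k : (exists n, P n) ->
  (mink P = k) <-> (P k /\ forall j, (j < k)%N -> ~ P j).
Proof.
move=> h; have [P1 P2] := minkP h; split.
  move=> <-; split => // j jk Pj; have := P2 _ Pj; rewrite leqNgt jk //.
move=> [Pk Pj]; apply/eqP; rewrite eqn_leq P2 //=.
rewrite leqNgt; apply/negP => kP; exact: Pj _ kP P1.
Qed.

Lemma meas_mink (P : nat -> T -> Prop) : (forall k, measurable [set w | P k w]) ->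
  (forall w, exists n, P n w) -> forall k, measurable [set w | mink (P^~ w) = k].
Proof.
move=> mP ex k.
rewrite (_ : [set w | _] = [set w | P k w] `&`
   \bigcap_j (if (j < k)%N then ~` [set w | P j w] else setT)).
  apply: measurableI => //; apply: bigcapT_measurable => j.
  by case: ifP => _ //; exact: measurableC.
apply/seteqP; split => w /=.
  move/(mink_eq k (ex w)) => [Pk Pj]; split => // j _.
  by case: ifPn => // jk; exact: Pj.
move=> [Pk Pj]; apply/(mink_eq k (ex w)); split => // j jk.
by have := Pj j I; rewrite jk.
Qed.

Lemma meas_idx (i : T -> nat) (h : nat -> R) : (forall m, measurable [set w | i w = m]) ->
  measurable_fun setT (fun w => h (i w)).
Proof.
move=> mi _ Y mY; rewrite setTI.
rewrite (_ : _ @^-1` _ = \bigcup_m (if pselect (Y (h m)) then [set w | i w = m] else set0)).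
  by apply: bigcupT_measurable => m; case: pselect => ? /=; [exact: mi|].
apply/seteqP; split => w /=.
  by move=> Yw; exists (i w) => //; case: pselect => /=.
by move=> [m _]; case: pselect => /= [Ym ->|_ []].
Qed.

Lemma meas_lt (f g : T -> R) : measurable_fun setT f -> measurable_fun setT g ->
  measurable [set w | f w < g w].
Proof.
move=> mf mg.
have mgf : measurable_fun setT (fun w => g w - f w) by exact: measurable_funB.
have := mgf measurableT `]0, +oo[%classic (measurable_itv _); rewrite setTI.
rewrite (_ : _ @^-1` _ = [set w | f w < g w]) //.
by apply/seteqP; split => w /=; rewrite in_itv /= andbT subr_gt0.
Qed.

End P8a.

Section P8b.
Context {R : realType} {V : completeNormedModType R} {d : measure_display} {T : measurableType d}.
Local Notation sf := (@simple_fun R d T V).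
Variable e : nat -> V.
Hypothesis de : dseq e.
Variable Y : T -> set V.
Hypothesis Yne : forall w, Y w !=set0.
Hypothesis Ymeas : forall U : set V, open U -> measurable [set w | Y w `&` U !=set0].

Definition rad (n : nat) : R := ((2:R) ^+ n)^-1.
Lemma rad_gt0 n : 0 < rad n.
Proof. by rewrite invr_gt0 exprn_gt0. Qed.
Lemma radS n : rad n = 2 * rad n.+1.
Proof.
rewrite /rad exprS invfM mulrA mulfV ?mul1r //.
Qed.
Lemma rad_small (eps : R) : 0 < eps -> exists N, rad N < eps.
Proof.
move=> eps0; have [k hk] := small_inv eps0; exists k.
apply: le_lt_trans hk; rewrite lef_pV2 ?posrE ?exprn_gt0 ?ltr0n //.
by rewrite -natrX ler_nat; apply: ltn_expl.
Qed.

Lemma ballN (x z : V) r : ball x r z <-> `|x - z| < r.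
Proof. by rewrite -ball_normE. Qed.

Fixpoint idx (n : nat) (w : T) : nat :=
  match n with
  | 0%N => mink (fun k => Y w `&` ball (e k) (rad 0) !=set0)
  | n'.+1 => mink (fun k => `|e k - e (idx n' w)| < rad n' /\
                            Y w `&` ball (e k) (rad n'.+1) !=set0)
  end.

Definition fseq n w := e (idx n w).

Lemma ex0 w : exists k, Y w `&` ball (e k) (rad 0) !=set0.
Proof.
have [z Yz] := Yne w; have [k hk] := de z (rad_gt0 0).
by exists k, z; split => //; apply/ballN; rewrite distrC.
Qed.

Lemma inv_step n w : Y w `&` ball (fseq n w) (rad n) !=set0 ->
  exists k, `|e k - fseq n w| < rad n /\ Y w `&` ball (e k) (rad n.+1) !=set0.
Proof.
move=> [z [Yz /ballN hz]].
pose del := Num.min (rad n.+1) (rad n - `|fseq n w - z|).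
have del0 : 0 < del by rewrite lt_min rad_gt0 subr_gt0.
have [k hk] := de z del0.
have h1 : `|z - e k| < rad n.+1 by apply: lt_le_trans hk _; rewrite ge_min lexx.
have h2 : `|z - e k| < rad n - `|fseq n w - z|.
  by apply: lt_le_trans hk _; rewrite ge_min lexx orbT.
exists k; split; last by exists z; split => //; apply/ballN; rewrite distrC.
have : `|e k - fseq n w| <= `|e k - z| + `|z - fseq n w| by exact: ler_distD.
have E1 : `|e k - z| = `|z - e k| by rewrite distrC.
have E2 : `|z - fseq n w| = `|fseq n w - z| by rewrite distrC.
lra.
Qed.

Lemma inv_all n w : Y w `&` ball (fseq n w) (rad n) !=set0.
Proof.
elim: n => [|n IH]; first by have [] := minkP (ex0 w).
by have [] := minkP (inv_step IH); move=> [].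
Qed.

Lemma fstep n w : `|fseq n.+1 w - fseq n w| < rad n.
Proof. by have [] := minkP (inv_step (inv_all n w)); move=> []. Qed.

Lemma fdist n m w : (n <= m)%N -> `|fseq m w - fseq n w| <= 2 * rad n - 2 * rad m.
Proof.
elim: m => [|m IH].
  by rewrite leqn0 => /eqP ->; rewrite !subrr normr0.
rewrite leq_eqVlt => /orP[/eqP ->|]; first by rewrite !subrr normr0.
rewrite ltnS => /IH h.
have := fstep m w; have := ler_distD (fseq m w) (fseq m.+1 w) (fseq n w).
have := radS m; lra.
Qed.

Definition yl w := lim (fseq ^~ w @ \oo).

Lemma fcvg w : fseq ^~ w @ \oo --> yl w.
Proof.
apply: cauchy_cvg; apply: cauchy_exP => eps eps0.
have [N hN] := rad_small (divr_gt0 eps0 (ltr0Sn _ 1)).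
exists (fseq N w); exists N => // n /= Nn; apply/ballN.
rewrite distrC (le_lt_trans (fdist w Nn)) //.
have := rad_gt0 n; lra.
Qed.

Lemma ydist n w : `|yl w - fseq n w| <= 2 * rad n.
Proof.
apply/ler_addgt0Pr => eps eps0.
have := (iffLR (cvgrPdist_lt _ _) (@fcvg w)) _ eps0.
move=> [N _ HN].
have hm := HN (maxn N n) (leq_maxl _ _).
have := fdist w (leq_maxr N n).
have := ler_distD (fseq (maxn N n) w) (yl w) (fseq n w).
have := rad_gt0 (maxn N n).
move: hm => /=; lra.
Qed.

Lemma yclosed w (C : set V) : closed C -> Y w `<=` C -> C (yl w).
Proof.
move=> cC YC; rewrite ((closure_id C).1 cC) => B /nbhs_ballP [eps eps0 hB].
have [n hn] := rad_small (divr_gt0 eps0 (ltr0Sn _ 2)).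
have [z [Yz /ballN hz]] := inv_all n w.
exists z; split; first exact: YC.
apply: hB; apply/ballN.
have := ler_distD (fseq n w) (yl w) z; have := @ydist n w; have := rad_gt0 n; lra.
Qed.

Lemma midx n k : measurable [set w | idx n w = k].
Proof.
elim: n k => [|n IH] k.
  apply: (meas_mink (P := fun k w => Y w `&` ball (e k) (rad 0) !=set0)) => //.
    by move=> j; apply: Ymeas; exact: ball_open.
  exact: ex0.
apply: (meas_mink (P := fun k w => `|e k - e (idx n w)| < rad n /\
                            Y w `&` ball (e k) (rad n.+1) !=set0)).
  move=> j; apply: measurableI; last by apply: Ymeas; exact: ball_open.
  apply: (@meas_lt _ _ _ (fun w => `|e j - e (idx n w)|) (cst (rad n))).
    exact: (meas_idx (i := idx n) (fun m => `|e j - e m|)).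
  exact: measurable_cst.
by move=> w; exact: inv_step (inv_all n w).
Qed.

Definition phi j w := `|yl w - e j|.

Lemma mphi j : measurable_fun setT (phi j).
Proof.
apply: (@measurable_fun_cvg _ _ _ _ (fun n w => `|fseq n w - e j|)).
  by move=> n; exact: (meas_idx (i := idx n) (fun m => `|e m - e j|) (@midx n)).
by move=> w _; apply: cvg_norm; apply: cvgB => //; [exact: fcvg|exact: cvg_cst].
Qed.

Fixpoint am (n : nat) (w : T) : nat :=
  match n with
  | 0%N => 0%N
  | n'.+1 => if phi n'.+1 w < phi (am n' w) w then n'.+1 else am n' w
  end.

Lemma am_le n w : (am n w <= n)%N.
Proof. by elim: n => //= n IH; case: ifP => // _; exact: leqW. Qed.

Lemma am_min n w j : (j <= n)%N -> phi (am n w) w <= phi j w.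
Proof.
elim: n => [|n IH]; first by rewrite leqn0 => /eqP ->.
move=> jn /=; case: ifPn => h; rewrite leq_eqVlt in jn; case/orP: jn => [/eqP ->|] //.
- by rewrite ltnS => /IH; apply: le_trans; exact: ltW.
- by rewrite leNgt.
Qed.

Lemma mam n k : measurable [set w | am n w = k].
Proof.
elim: n k => [|n IH] k.
  by case: k => [|k] /=; [rewrite (_ : [set _ | _] = setT) //; apply/seteqP; split|
    rewrite (_ : [set _ | _] = set0) //; apply/seteqP; split].
have mlt : forall m, measurable [set w | phi n.+1 w < phi m w].
  by move=> m; apply: meas_lt; exact: mphi.
rewrite (_ : [set w | _] = (if k == n.+1 then \bigcup_m ([set w | am n w = m] `&`
   [set w | phi n.+1 w < phi m w]) else set0) `|`
   ([set w | am n w = k] `&` ~` [set w | phi n.+1 w < phi k w])).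
  apply: measurableU; last by apply: measurableI => //; exact: measurableC.
  case: ifP => _ //; apply: bigcupT_measurable => m; exact: measurableI.
apply/seteqP; split => w /=.
  case: ifPn => h.
    by move=> <-; left; rewrite eqxx; exists (am n w).
  move=> amk; right; split => //; rewrite -amk; exact/negP.
case=> [|[amk]].
  by case: eqP => // -> [m _ [/= <- h]]; rewrite h.
move=> hk; rewrite amk ifF //; exact/negP.
Qed.

Definition sn n : seq (V * set T) := [seq (e j, [set w | am n w = j]) | j <- iota 0 n.+1].

Lemma srep_sn n : srep (sn n).
Proof. by move=> p /mapP[j _ ->]; exact: mam. Qed.

Lemma sf_sn n w : sf (sn n) w = e (am n w).
Proof.
rewrite /simple_fun big_map.
rewrite (bigD1_seq (am n w)); [|by rewrite mem_iota add0n ltnS am_le|exact: iota_uniq].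
rewrite /= indicE mem_set // scale1r big1_seq ?addr0 // => j /andP[jn _].
by rewrite indicE memNset ?scale0r // => /= h; move: jn; rewrite h eqxx.
Qed.

Lemma sn_cvg w : (fun n => sf (sn n) w) @ \oo --> yl w.
Proof.
apply/cvgrPdist_lt => eps eps0.
have [j hj] := de (yl w) eps0.
exists j => // n /= jn; rewrite sf_sn.
exact: le_lt_trans (am_min w jn) hj.
Qed.

Lemma sn_bound n w : `|yl w - sf (sn n) w| <= `|yl w - e 0%N|.
Proof. by rewrite sf_sn; exact: (am_min w (leq0n n)). Qed.

End P8b.

Section P8c.
Context {R : realType} {V : completeNormedModType R} {d : measure_display} {T : measurableType d}.
Local Notation sf := (@simple_fun R d T V).

Lemma KRN (e : nat -> V) (Y : T -> set V) : dseq e -> (forall w, Y w !=set0) ->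
  (forall U : set V, open U -> measurable [set w | Y w `&` U !=set0]) ->
  exists (y : T -> V) (s : nat -> seq (V * set T)),
  [/\ forall n, srep (s n), forall w, (fun n => sf (s n) w) @ \oo --> y w,
      (forall n w, `|y w - sf (s n) w| <= `|y w - e 0%N|) &
      forall w (C : set V), closed C -> Y w `<=` C -> C (y w)].
Proof.
move=> de Yne Ym; exists (yl e Y), (sn e Y); split.
- by move=> n; apply: srep_sn.
- by move=> w; apply: sn_cvg.
- by move=> n w; apply: sn_bound.
- by move=> w C cC YC; apply: yclosed.
Qed.
End P8c.


Section P9.
Context {R : realType} {V : completeNormedModType R} {d : measure_display} {T : measurableType d}.
Variable mu : {finite_measure set T -> \bar R}.
Local Notation sf := (@simple_fun R d T V).
Local Notation si := (@simple_int R d T V mu).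
Local Notation SM := (@SM R V d T).
Local Notation B := (@B R V d T mu).
Local Notation Ie := (@Ie R V d T mu).

Lemma L1_bound (y : T -> V) (s : nat -> seq (V * set T)) (v0 : V) (h : T -> \bar R) :
  (forall n, srep (s n)) -> (forall w, (fun n => sf (s n) w) @ \oo --> y w) ->
  (forall n w, `|y w - sf (s n) w| <= `|y w - v0|) ->
  mu.-integrable setT h -> (forall w, ((`|y w|)%:E <= h w)%E) ->
  exists a, B y a.
Proof.
move=> hs cs bs ih yh.
have hy : SM y by exists s.
apply: (@B_exists _ _ _ _ mu _ s) => //.
have := @dominated_convergence _ _ _ mu setT measurableT
  (fun n w => (`|y w - sf (s n) w|)%:E) (cst 0%E) (fun w => h w + (`|v0|)%:E)%E.
case.
- by move=> n; apply: SM_distE => //; exact: SM_sf.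
- exact: measurable_cst.
- apply: aeW => w _; apply: cvg_EFin; first exact: nearW.
  rewrite (_ : 0 = `|y w - y w|); last by rewrite subrr normr0.
  apply: cvg_norm; apply: cvgB => //; exact: cvg_cst.
- by apply: integrableD => //; exact: finite_measure_integrable_cst.
- apply: aeW => w n _; rewrite gee0_abs ?lee_fin //.
  apply: (le_trans (y := ((`|y w|)%:E + (`|v0|)%:E)%E)); last exact: leeD (yh w) (le_refl _).
  rewrite -EFinD lee_fin (le_trans (bs n w)) //; exact: ler_normB.
move=> _ + _; rewrite /Ie.
by under eq_fun do under eq_integral do rewrite sube0 gee0_abs ?lee_fin //.
Qed.

Lemma B_transfer f g b : SM f -> {ae mu, forall w, f w = g w} -> B g b -> B f b.
Proof.
move=> hf ae [hg [s [hs [Is cs]]]]; split => //; exists s; split => //; split => //.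
suff -> : (fun n => Ie f (s n)) = (fun n => Ie g (s n)) by [].
by apply: funext => n; rewrite /Ie (Ie_ae hg (hs n) ae).
Qed.

Lemma ae_forall_nat (P : nat -> T -> Prop) : (forall n, {ae mu, forall w, P n w}) ->
  {ae mu, forall w, forall n, P n w}.
Proof.
move=> h; apply: negligibleS (negligible_bigcup h) => w /= hw.
have [n hn] : exists n, ~ P n w.
  by apply: contrapT => hn; apply: hw => n; apply: contrapT => hh; apply: hn; exists n.
by exists n.
Qed.

Lemma ae2 (P Q S : T -> Prop) : {ae mu, forall w, P w} -> {ae mu, forall w, Q w} ->
  (forall w, P w -> Q w -> S w) -> {ae mu, forall w, S w}.
Proof. by move=> hP hQ h; move: hP hQ; apply: filterS2. Qed.

End P9.


Section P10.
Context {R : realType} {V : completeNormedModType R} {d : measure_display} {T : measurableType d}.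
Variable mu : {finite_measure set T -> \bar R}.
Local Notation sf := (@simple_fun R d T V).
Local Notation SM := (@SM R V d T).
Local Notation B := (@B R V d T mu).
Variables (X : T -> set V) (a : V).

Lemma back : (exists x : T -> V, L1 mu x /\ {ae mu, forall w, X w = [set x w]} /\ bochner mu x a) ->
  aumann mu X = [set a].
Proof.
move=> [x [hL [hae hb]]]; apply/seteqP; split => b /=.
  move=> [z [hLz zae] hzb].
  have [z' [hz' ez hBz]] := bochner_B hzb.
  have [x' [hx' ex hBx]] := bochner_B hb.
  have e1 : {ae mu, forall w, z w = x w}.
    by apply: (ae2 zae hae) => w h1 h2; move: h1; rewrite h2.
  have e2 : {ae mu, forall w, z' w = x w}.
    by apply: (ae2 e1 ez) => w h1 h2; rewrite -h2.
  have e3 : {ae mu, forall w, z' w = x' w}.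
    by apply: (ae2 e2 ex) => w h1 h2; rewrite -h2.
  exact: B_uniq hBz (B_transfer hz' e3 hBx).
move=> ->; exists x => //; split => //.
by apply: (ae2 hae hae) => w h _; rewrite h.
Qed.

Hypothesis hX : random_closed_set X.
Hypothesis hib : integrably_bounded mu X.

Lemma keyclaim (e : nat -> V) (x' : T -> V) : dseq e -> SM x' -> B x' a -> aumann mu X = [set a] ->
  {ae mu, forall w, X w (x' w)} ->
  forall y b, SM y -> (forall w, X w (y w)) -> B y b -> {ae mu, forall w, y w = x' w}.
Proof.
move=> de hx' hBx H Xx' y b hy Xy hBy.
have g0 : {ae mu, forall w, y w - x' w = 0}.
  apply: (B_zero de (SM_add hy (SM_neg hx'))) => A mA.
  have [c1 h1] := B_indic mA hBy.
  have [c2 h2] := B_indic mA hBx.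
  have mAc := measurableC mA.
  have [c3 h3] := B_indic mAc hBx.
  have hz := B_add h1 h3.
  have hzsm := hz.1.
  have : aumann mu X (c1 + c3).
    exists (fun w => (\1_A w : R) *: y w + (\1_(~` A) w : R) *: x' w).
      split; first by exists (c1 + c3); apply: (B_bochner _ hz); exact: aeW.
      apply: (ae2 Xx' Xx') => w h _.
      rewrite !indicE; case: (boolP (w \in A)) => wA.
        have nA : w \notin ~` A by apply/negP => /set_mem; apply; exact: set_mem.
        by rewrite (negbTE nA) /= scale1r scale0r addr0.
      have nA : w \in ~` A by apply: mem_set => /mem_set; exact/negP.
      by rewrite nA /= scale1r scale0r add0r.
    by apply: (B_bochner _ hz); exact: aeW.
  rewrite H => /= c13.
  have hx2 := B_add h2 h3.
  have ex2 : (fun w => (\1_A w : R) *: x' w + (\1_(~` A) w : R) *: x' w) = x'.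
    apply: funext => w; rewrite -scalerDl !indicE.
    case: (boolP (w \in A)) => wA.
      have nA : w \notin ~` A by apply/negP => /set_mem; apply; exact: set_mem.
      by rewrite (negbTE nA) /= addr0 scale1r.
    have nA : w \in ~` A by apply: mem_set => /mem_set; exact/negP.
    by rewrite nA /= add0r scale1r.
  rewrite ex2 in hx2.
  have c23 := B_uniq hx2 hBx.
  have c12 : c1 = c2 by apply: (addIr c3); rewrite c13 c23.
  have := B_add h1 (B_neg h2).
  rewrite c12 subrr.
  by under eq_fun do rewrite -scalerBr.
by apply: (ae2 g0 g0) => w h _; apply/eqP; rewrite -subr_eq0; apply/eqP.
Qed.

Lemma fwd : separable_space (V := V) -> aumann mu X = [set a] ->
  exists x : T -> V, L1 mu x /\ {ae mu, forall w, X w = [set x w]} /\ bochner mu x a.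
Proof.
move=> sep H.
have : aumann mu X a by rewrite H.
move=> [x0 [hL0 x0ae] hb0].
have [x' [hx' ex hBx]] := bochner_B hb0.
have [e de] := sep_dseq sep.
have Xx' : {ae mu, forall w, X w (x' w)}.
  by apply: (ae2 x0ae ex) => w h1 h2; rewrite -h2.
have KC := keyclaim de hx' hBx H Xx'.
pose r (k : nat) : R := (k.+1%:R)^-1.
have r0 k : 0 < r k by rewrite invr_gt0 ltr0n.
have Q : forall j k, {ae mu, forall w, forall z, X w z -> ball (e j) (r k) z ->
                         `|e j - x' w| <= r k}.
  move=> j k.
  pose Bw w := X w `&` ball (e j) (r k) !=set0.
  pose Y w := [set z | X w z /\ (Bw w -> ball (e j) (r k) z)].
  have Yne w : Y w !=set0.
    have [[z0 Xz0] _] := hX.1 w.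
    case: (pselect (Bw w)) => hB.
      by have [z [Xz bz]] := hB; exists z; split.
    by exists z0; split.
  have mB : measurable [set w | Bw w] by apply: hX.2; exact: ball_open.
  have Ym : forall U : set V, open U -> measurable [set w | Y w `&` U !=set0].
    move=> U oU.
    rewrite (_ : [set w | _] = [set w | X w `&` (ball (e j) (r k) `&` U) !=set0] `|`
                              (~` [set w | Bw w] `&` [set w | X w `&` U !=set0])).
      apply: measurableU; first by apply: hX.2; apply: openI => //; exact: ball_open.
      by apply: measurableI; [exact: measurableC|exact: hX.2].
    apply/seteqP; split => w /=.
      move=> [z [[Xz bz] Uz]].
      case: (pselect (Bw w)) => hB; first by left; exists z; split => //; split => //; exact: bz.
      by right; split => //; exists z.
    case=> [[z [Xz [bz Uz]]]|[nB [z [Xz Uz]]]].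
      by exists z; split => //; split.
    by exists z; split => //; split => // /nB.
  have [y [s [hs cs bs ycl]]] := KRN de Yne Ym.
  have Xy w : X w (y w).
    apply: ycl; first exact: (hX.1 w).2.
    by move=> z [].
  have By w : Bw w -> `|e j - y w| <= r k.
    move=> hB.
    have : closed_ball (e j) (r k) (y w).
      apply: ycl; first exact: closed_ball_closed.
      move=> z [_ /(_ hB) bz]; rewrite closed_ballE //=.
      by move: bz; rewrite -ball_normE /= => /ltW.
    by rewrite closed_ballE.
  have [b hBy] : exists b, B y b.
    apply: (L1_bound (v0 := e 0%N) hs cs bs hib) => w.
    by apply: ereal_sup_ubound; exists (y w).
  have hy : SM y by exists s.
  have yx := KC y b hy Xy hBy.
  apply: (ae2 yx yx) => w yw _ z Xz bz.
  rewrite -yw; apply: By; exists z; split.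
  done. done.
have Qall : {ae mu, forall w, forall j k, forall z, X w z -> ball (e j) (r k) z ->
                         `|e j - x' w| <= r k}.
  apply: ae_forall_nat => j; exact: ae_forall_nat.
exists x0; split; first exact: hL0.
split; last exact: hb0.
apply: (ae2 Qall (ae2 Xx' ex (fun w h1 h2 => conj h1 h2))) => w hQ [Xw xw].
apply/seteqP; split => z /=; last by move=> ->; rewrite xw.
move=> Xz; rewrite xw; apply: contrapT => zx.
have rho0 : 0 < `|z - x' w| by rewrite normr_gt0 subr_eq0; apply/eqP.
have [k hk] := small_inv (divr_gt0 rho0 (ltr0Sn _ 2)).
have [j hj] := de z (r k) (r0 k).
have := hQ j k z Xz.
rewrite -ball_normE /= distrC => /(_ hj) hx.
have := ler_distD (e j) z (x' w).
rewrite -/(r k) in hk.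
lra.
Qed.

End P10.

Unset Implicit Arguments.
Set Strict Implicit.

Theorem proposition3p2 (R : realType) (V : completeNormedModType R)
  (d : measure_display) (T : measurableType d)
  (mu : {finite_measure set T -> \bar R})
  (X : T -> set V) (a : V) :
  separable_space (V := V) ->
  random_closed_set X -> integrably_bounded mu X ->
  (aumann mu X = [set a] <->
   exists x : T -> V, L1 mu x /\ {ae mu, forall w, X w = [set x w]} /\
     bochner mu x a).
Proof.
move=> sep hX hib; split; first exact: fwd.
exact: back.
Qed.
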